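(* There is an absolute constant $c'>0$ such that the following holds. Let $k\ge1$, let $V$ be the vertex set of $Dec_kC$, let $S\subseteq V$, and let $\sigma_i=|S\cap l_i|/|l_i|$ for $1\le i\le k+1$. Then for every $1\le i\le k$, $$|E(S,V\setminus S)\cap E(l_i,l_{i+1})|\ge c'\cdot 6\cdot|\sigma_i-\sigma_{i+1}|\cdot|l_i|.$$
   Context: Let $D$ be the bipartite graph with product vertices $m_1,\dots,m_7$, output vertices $c_1,c_2,c_3,c_4$, and edges $c_1m_1,c_1m_4,c_1m_5,c_1m_7$, $c_2m_3,c_2m_5$, $c_3m_2,c_3m_4$, $c_4m_1,c_4m_2,c_4m_3,c_4m_6$. These encode Strassen's formulas for $C_{11},C_{12},C_{21},C_{22}$ in terms of $M_1,\dots,M_7$. For $k\ge1$, $Dec_kC$ is the undirected graph on the disjoint union of levels $l_1,\dots,l_{k+1}$. Level $l_i$ is the set of words $w_1\cdots w_k$ with $w_1,\dots,w_{k-i+1}\in\{1,2,3,4\}$ and $w_{k-i+2},\dots,w_k\in\{1,\dots,7\}$, so $|l_i|=4^{k-i+1}7^{i-1}$. For $u\in l_i$, $v\in l_{i+1}$ ($1\le i\le k$) and $p=k-i+1$, the pair $uv$ is an edge iff $u_t=v_t$ for all $t\neq p$ and $c_{u_p}m_{v_p}$ is an edge of $D$. There are no other edges. Maximum degree is $6$. $E(A,B)$ denotes the set of edges with one endpoint in $A$ and the other in $B$. *)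

(* Defs.v *)
From HB Require Import structures.
From mathcomp Require Import all_boot all_order all_algebra.
Set Implicit Arguments. Unset Strict Implicit. Unset Printing Implicit Defensive.
Import Order.TTheory GRing.Theory Num.Theory.

(* Conventions (0-based): product vertices m_1..m_7 are 0..6, output vertices
   c_1..c_4 are 0..3; level l_i (i = 1..k+1) is encoded by j = i-1 in 'I_(k+1);
   word positions 1..k are encoded by 0..k-1. *)

Definition Dedge (c m : nat) : bool :=
  match c with
  | 0 => m \in [:: 0; 3; 4; 6]
  | 1 => m \in [:: 2; 4]
  | 2 => m \in [:: 1; 3]
  | 3 => m \in [:: 0; 1; 2; 5]
  | _ => false
  end.

(* Ambient type: a level tag together with a word over {0..6}.  Only those
   pairs lying in some level are actual vertices of Dec_k C. *)
Definition vtx (k : nat) := ('I_k.+1 * {ffun 'I_k -> 'I_7})%type.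

Definition lev (k j : nat) : {set vtx k} :=
  [set v : vtx k | (v.1 == j :> nat) &&
     [forall t : 'I_k, ((t : nat) < k - j) ==> ((v.2 t : nat) < 4)]].

Definition Vset (k : nat) : {set vtx k} := \bigcup_(j < k.+1) lev k j.

(* Directed version of adjacency: u in l_(j+1), v in l_(j+2), they agree off
   position p = k - j (1-based), i.e. 0-based position k - j - 1, and
   c_{u_p} m_{v_p} is an edge of D. *)
Definition adj_up (k : nat) (u v : vtx k) : bool :=
  [exists j : 'I_k,
    [&& u \in lev k j, v \in lev k j.+1,
        [forall t : 'I_k, ((t : nat) != k - j.+1) ==> (u.2 t == v.2 t)] &
        [forall t : 'I_k, ((t : nat) == k - j.+1) ==> Dedge (u.2 t) (v.2 t)]]].

Arguments adj_up k u v : clear implicits.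

Definition decEdge (k : nat) (u v : vtx k) : bool := adj_up k u v || adj_up k v u.

Arguments decEdge k u v : clear implicits.

(* E(S, V \ S) ∩ E(l_(j+1), l_(j+2)): each undirected edge between the two
   consecutive levels is represented once, as the pair (u, v) with u in the
   lower-indexed level. *)
Definition cross_edges (k j : nat) (S : {set vtx k}) : {set vtx k * vtx k} :=
  [set e : vtx k * vtx k |
    [&& e.1 \in lev k j, e.2 \in lev k j.+1, decEdge k e.1 e.2 &
        (e.1 \in S) != (e.2 \in S)]].

Arguments cross_edges k j S : clear implicits.

Definition sigma (k j : nat) (S : {set vtx k}) : rat :=
  (#|S :&: lev k j|%:R / #|lev k j|%:R)%R.

Arguments sigma k j S : clear implicits.

(* Main.v *)
Require Import Defs.
From HB Require Import structures.
From mathcomp Require Import all_boot all_order all_algebra.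
From mathcomp Require Import zify ring lra.
Import Order.TTheory GRing.Theory Num.Theory.
Set Implicit Arguments. Unset Strict Implicit. Unset Printing Implicit Defensive.

Lemma Dconn (fX fY : nat -> bool) :
  (forall c m, c < 4 -> m < 7 -> Dedge c m -> fX c = fY m) ->
  forall c m, c < 4 -> m < 7 -> fX c = fY m.
Proof.
move=> H.
have e00 := H 0 0 isT isT isT. have e30 := H 3 0 isT isT isT.
have e21 := H 2 1 isT isT isT. have e31 := H 3 1 isT isT isT.
have e12 := H 1 2 isT isT isT. have e32 := H 3 2 isT isT isT.
have e03 := H 0 3 isT isT isT. have e23 := H 2 3 isT isT isT.
have e04 := H 0 4 isT isT isT. have e14 := H 1 4 isT isT isT.
have e35 := H 3 5 isT isT isT. have e06 := H 0 6 isT isT isT.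
have hX : forall c, c < 4 -> fX c = fX 0.
  move=> c; do 4?[case: c => [|c]] => //= _; congruence.
have hY : forall m, m < 7 -> fY m = fX 0.
  move=> m; do 7?[case: m => [|m]] => //= _; congruence.
by move=> c m hc hm; rewrite hX // hY.
Qed.

Section Main.
Variables (k j : nat).
Hypothesis hj : j < k.

Lemma hp : k - j.+1 < k. Proof. lia. Qed.
Definition pk : 'I_k := Ordinal hp.

Definition setw (w : {ffun 'I_k -> 'I_7}) (a : 'I_7) : {ffun 'I_k -> 'I_7} :=
  [ffun t : 'I_k => if t == pk then a else w t].

Definition up (u : vtx k) (m : 'I_7) : vtx k := (inord j.+1, setw u.2 m).
Definition down (u : vtx k) (a : 'I_7) : vtx k := (inord j, setw u.2 a).

Lemma setw_pk w a : setw w a pk = a.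
Proof. by rewrite ffunE eqxx. Qed.
Lemma setw_ne w a t : t != pk -> setw w a t = w t.
Proof. by rewrite ffunE => /negbTE ->. Qed.
Lemma setwK w a b : setw (setw w a) b = setw w b.
Proof. apply/ffunP => t; rewrite !ffunE; by case: (t == pk). Qed.
Lemma setw_id w : setw w (w pk) = w.
Proof. apply/ffunP => t; rewrite !ffunE; by case: eqP => [->|]. Qed.

Definition low (w : {ffun 'I_k -> 'I_7}) :=
  forall t : 'I_k, (t : nat) < k - j.+1 -> (w t : nat) < 4.

Lemma lev_tag u i : u \in lev k i -> i < k.+1 -> u.1 = inord i.
Proof. rewrite inE => /andP[/eqP h _] hi; apply/val_inj; by rewrite /= inordK. Qed.

Lemma lev_low u : u \in lev k j -> low u.2.
Proof.
rewrite inE => /andP[_ /forallP h] t ht; have := h t; rewrite (_ : t < k - j) //; lia.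
Qed.
Lemma lev1_low u : u \in lev k j.+1 -> low u.2.
Proof. rewrite inE => /andP[_ /forallP h] t ht; have := h t; by rewrite ht. Qed.
Lemma lev_pk u : u \in lev k j -> (u.2 pk : nat) < 4.
Proof. rewrite inE => /andP[_ /forallP h]; have := h pk; rewrite /= (_ : k - j.+1 < k - j) //; lia. Qed.

Lemma ne_pk (t : 'I_k) : (t == pk) = ((t : nat) == k - j.+1).
Proof. by []. Qed.

Lemma down_lev w (a : 'I_7) : low w -> (a : nat) < 4 -> ((inord j : 'I_k.+1), setw w a) \in lev k j.
Proof.
move=> hw ha; rewrite inE /= inordK; last lia.
rewrite eqxx /=; apply/forallP => t; apply/implyP => ht; rewrite ffunE ne_pk.
case: eqP => [//|hne]; apply: hw; lia.
Qed.

Lemma up_lev w (m : 'I_7) : low w -> ((inord j.+1 : 'I_k.+1), setw w m) \in lev k j.+1.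
Proof.
move=> hw; rewrite inE /= inordK; last lia.
rewrite eqxx /=; apply/forallP => t; apply/implyP => ht; rewrite ffunE ne_pk.
case: eqP => [hne|hne]; first lia. by apply: hw.
Qed.

Lemma down_self u : u \in lev k j -> down u (u.2 pk) = u.
Proof. move=> hu; case: u hu => u1 u2 hu; rewrite /down setw_id -(lev_tag hu) //; lia. Qed.
Lemma up_self u : u \in lev k j.+1 -> up u (u.2 pk) = u.
Proof. move=> hu; case: u hu => u1 u2 hu; rewrite /up setw_id -(lev_tag hu) //; lia. Qed.

Lemma up_down v a b : up (down v a) b = up v b.
Proof. by rewrite /up /down /= setwK. Qed.

Lemma edge_ok u (c m : 'I_7) : low u.2 -> (c : nat) < 4 -> Dedge c m ->
  decEdge k (down u c) (up u m).
Proof.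
move=> hl hc hd; apply/orP; left; apply/existsP; exists (Ordinal hj) => /=.
apply/and4P; split.
- exact: down_lev.
- exact: up_lev.
- apply/forallP => t; apply/implyP => ht; rewrite !setw_ne //.
- apply/forallP => t; apply/implyP => /eqP ht.
  have -> : t = pk by apply/val_inj.
  by rewrite !setw_pk.
Qed.

Variable S : {set vtx k}.

Definition PA := [set x : vtx k * 'I_7 | x.1 \in S :&: lev k j].
Definition PB := [set x : vtx k * 'I_7 | (x.1 \in lev k j) && (up x.1 x.2 \in S)].
Definition PD := [set x : vtx k * 'I_7 |
  (x.1 \in lev k j) && ((x.1 \in S) != (up x.1 x.2 \in S))].

Lemma cardPA : #|PA| = 7 * #|S :&: lev k j|.
Proof.
have -> : PA = setX (S :&: lev k j) setT by apply/setP => x; rewrite !inE andbT.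
by rewrite cardsX cardsT card_ord mulnC.
Qed.

Lemma card4 : #|[set a : 'I_7 | a < 4]| = 4.
Proof. rewrite cardsE -sum1_card big_mkcond /=. rewrite !big_ord_recr big_ord0 /=. reflexivity. Qed.

Lemma cardPB : #|PB| = 4 * #|S :&: lev k j.+1|.
Proof.
pose h (x : vtx k * 'I_7) := (up x.1 x.2, x.1.2 pk).
have inj : {in PB &, injective h}.
  move=> [u m] [u' m']; rewrite [_ \in PB]inE [_ \in PB]inE /= => /andP[hu _] /andP[hu' _] [e1 e2].
  have em : m = m'.
    by move: (congr1 (fun w : {ffun 'I_k -> 'I_7} => w pk) e1); rewrite /= !setw_pk.
  subst m'; congr pair.
  rewrite -(down_self hu) -(down_self hu') -e2.
  move: (congr1 (fun w : {ffun 'I_k -> 'I_7} => setw w (u.2 pk)) e1); rewrite /= !setwK => ew.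
  by rewrite /down ew.
rewrite -(card_in_imset inj).
have -> : h @: PB = setX (S :&: lev k j.+1) [set a : 'I_7 | a < 4].
  apply/setP => [[v a]]; rewrite in_setX in_setI [a \in _]inE /=; apply/imsetP/idP.
  - move=> [[u m]]; rewrite [_ \in PB]inE /= => /andP[hu huS] [-> ->].
    rewrite huS lev_pk // andbT; apply: up_lev; exact: lev_low.
  - move=> /andP[/andP[hvS hv] ha]; exists (down v a, v.2 pk).
      rewrite [_ \in PB]inE /= down_lev //; last exact: lev1_low.
      by rewrite up_down up_self.
    by rewrite /h /= up_down up_self // /down /= setw_pk.
by rewrite cardsX card4 mulnC.
Qed.

Lemma cardPD : #|PD| <= 49 * #|cross_edges k j S|.
Proof.
pose g (y : (vtx k * vtx k) * ('I_7 * 'I_7)) := (down y.1.1 y.2.1, y.2.2).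
have sub : PD \subset g @: setX (cross_edges k j S) [set: 'I_7 * 'I_7].
  apply/subsetP => -[u m]; rewrite [_ \in PD]inE /= => /andP[hu hne].
  apply/negPn/negP => /negP hnot; move/negP: hne; apply.
  pose fX n := down u (inord n) \in S.
  pose fY n := up u (inord n) \in S.
  have H : forall c m, c < 4 -> m < 7 -> Dedge c m -> fX c = fY m.
    move=> c m' hc hm hd; apply/eqP/negPn/negP => hdiff; apply: hnot.
    apply/imsetP; exists ((down u (inord c), up u (inord m')), (u.2 pk, m)).
      rewrite in_setX in_setT andbT [_ \in cross_edges _ _ _]inE /=; apply/and4P; split.
      - apply: down_lev; [exact: lev_low | by rewrite inordK //; lia].
      - apply: up_lev; exact: lev_low.
      - apply: edge_ok; [exact: lev_low | by rewrite inordK //; lia |].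
        by rewrite !inordK //; lia.
      - exact: hdiff.
    by rewrite /g /= /down /= setwK -/(down u (u.2 pk)) down_self.
  have := Dconn H (lev_pk hu) (ltn_ord m).
  by rewrite /fX /fY !inord_val down_self // => ->.
apply: (leq_trans (subset_leq_card sub)); apply: (leq_trans (leq_imset_card _ _)).
by rewrite cardsX cardsT card_prod card_ord mulnC.
Qed.

Lemma ineqs : 7 * #|S :&: lev k j| <= 4 * #|S :&: lev k j.+1| + 49 * #|cross_edges k j S|
  /\ 4 * #|S :&: lev k j.+1| <= 7 * #|S :&: lev k j| + 49 * #|cross_edges k j S|.
Proof.
have h1 : PA \subset PB :|: PD.
  apply/subsetP => -[u m]; rewrite in_setU [_ \in PA]inE [_ \in PB]inE [_ \in PD]inE in_setI /= => /andP[hS hu].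
  rewrite hu hS /=; by case: (up u m \in S).
have h2 : PB \subset PA :|: PD.
  apply/subsetP => -[u m]; rewrite in_setU [_ \in PA]inE [_ \in PB]inE [_ \in PD]inE in_setI /= => /andP[hu hS].
  rewrite hu hS /=; by case: (u \in S).
have c1 := subset_leq_card h1; have c2 := subset_leq_card h2.
rewrite cardsU in c1; rewrite cardsU in c2.
rewrite -cardPA -cardPB; have := cardPD; split; lia.
Qed.

End Main.

Section Alg.
Local Open Scope ring_scope.
Lemma alg (L L' s s' c : nat) : (4 * L' = 7 * L)%N ->
  (7 * s <= 4 * s' + 49 * c)%N -> (4 * s' <= 7 * s + 49 * c)%N ->
  ((1/42%:R : rat) * 6%:R * `|s%:R / L%:R - s'%:R / L'%:R| * L%:R <= c%:R)%R.
Proof.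
move=> hL h1 h2.
have [->|L0] := eqVneq L 0%N; first by rewrite mulr0.
have eL' : (L'%:R : rat) = 7%:R * L%:R / 4%:R.
  have h4 : (4%:R * L'%:R : rat) = 7%:R * L%:R by rewrite -!natrM hL.
  by rewrite -h4; field.
have Lr : (L%:R : rat) != 0 by rewrite pnatr_eq0.
have ex : (s%:R / L%:R - s'%:R / L'%:R) * (L%:R : rat) = (7%:R * s%:R - 4%:R * s'%:R) / 7%:R.
  rewrite eL'; field; rewrite Lr /=; by [].
have e2 : `|s%:R / L%:R - s'%:R / L'%:R| * (L%:R : rat) = `|(s%:R / L%:R - s'%:R / L'%:R) * L%:R|.
  by rewrite normrM (ger0_norm (ler0n _ L)).
rewrite -mulrA e2 ex.
have h1' : (7%:R * s%:R <= 4%:R * s'%:R + 49%:R * c%:R :> rat)%R.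
  by rewrite -!natrM -natrD ler_nat.
have h2' : (4%:R * s'%:R <= 7%:R * s%:R + 49%:R * c%:R :> rat)%R.
  by rewrite -!natrM -natrD ler_nat.
have hc : (0 <= c%:R :> rat)%R by [].
have h7 : `|(7%:R : rat)^-1| = 7%:R^-1 by rewrite ger0_norm // invr_ge0 ler0n.
rewrite normrM h7.
have hx : `|7%:R * s%:R - 4%:R * s'%:R| <= 49%:R * (c%:R : rat).
  rewrite ler_norml; apply/andP; split; clear -h1' h2'; lra.
move: hx; clear -hc.
set y := `|_|; move=> hx.
have -> : 1 / 42%:R * 6%:R * (y * 7%:R^-1) = y / 49%:R :> rat by field.
by rewrite ler_pdivrMr // mulrC.
Qed.
End Alg.
Lemma levcard k j (hj : j < k) : (4 * #|lev k j.+1| = 7 * #|lev k j|)%N.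
Proof.
have := cardPA j [set: vtx k]; have := cardPB hj [set: vtx k].
rewrite !setTI => <- <-.
apply: eq_card => -[u m].
by rewrite !inE andbT.
Qed.

Theorem claim4 :
  exists c' : rat, (0 < c')%R /\
    forall (k : nat), 1 <= k ->
    forall (S : {set vtx k}), S \subset Vset k ->
    forall (j : nat), j < k ->
      (c' * 6%:R * `|sigma k j S - sigma k j.+1 S| * (#|lev k j|)%:R
         <= (#|cross_edges k j S|)%:R)%R.
Proof.
exists (1/42%:R)%R; split; first by [].
move=> k _ S _ j hj.
have [h1 h2] := ineqs hj S.
exact: (alg (levcard hj) h1 h2).
Qed.
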